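(* Let $\mathcal{P}\subset K[x_1,\ldots,x_n]$ be a chordal polynomial set with $x_1<\cdots<x_n$ as a perfect elimination ordering. Consider a successive reduction $\overline{\mathrm{red}}_n(\mathcal{P}),\overline{\mathrm{red}}_{n-1}(\mathcal{P}),\ldots,\overline{\mathrm{red}}_1(\mathcal{P})$. Assume that for each $i=n,\ldots,1$ with $\overline{\mathrm{red}}_{i+1}(\mathcal{P})^{(i)}\neq\emptyset$, the reduction data $(T_i,\mathcal{R}_i)$ used at step $i$ satisfies $\mathrm{supp}(T_i)=\mathrm{supp}\big(\overline{\mathrm{red}}_{i+1}(\mathcal{P})^{(i)}\big)$. Then $G(\overline{\mathrm{red}}_1(\mathcal{P}))=G(\mathcal{P})$.
   Context: Let $K$ be a field and $K[x_1,\ldots,x_n]$ the polynomial ring, with the variables ordered $x_1<\cdots<x_n$. For a polynomial $F$, $\mathrm{supp}(F)$ is the set of variables effectively appearing in $F$. For a set of polynomials $\mathcal{P}$, $\mathrm{supp}(\mathcal{P})=\bigcup_{F\in\mathcal{P}}\mathrm{supp}(F)$. For a nonconstant $F$, $\mathrm{lv}(F)$ is the greatest variable in $\mathrm{supp}(F)$. For a polynomial set $\mathcal{P}$ and $1\le i\le n$, $\mathcal{P}^{(i)}=\{P\in\mathcal{P}:\mathrm{lv}(P)=x_i\}$; constants belong to no $\mathcal{P}^{(i)}$. The associated graph $G(\mathcal{P})$ is the undirected graph whose vertex set is $\mathrm{supp}(\mathcal{P})$, with an edge between distinct $x_i,x_j$ iff some $F\in\mathcal{P}$ has $x_i,x_j\in\mathrm{supp}(F)$.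 For graphs, $G\subseteq G'$ means that $G$ is a subgraph of $G'$, i.e. both the vertex set and the edge set are contained. An ordering of the vertices of a graph is a perfect elimination ordering if, for every vertex $v$, the set consisting of $v$ and all neighbours of $v$ smaller than $v$ is a clique. A polynomial set $\mathcal{P}$ is called chordal with $x_1<\cdots<x_n$ as a perfect elimination ordering if the restriction of this ordering to $\mathrm{supp}(\mathcal{P})$ is a perfect elimination ordering of $G(\mathcal{P})$. Reduction step: let $\mathcal{S}$ be a polynomial set and $1\le i\le n$ with $\mathcal{S}^{(i)}\neq\emptyset$. Reduction data for $(\mathcal{S},i)$ is a pair $(T_i,\mathcal{R}_i)$ such that: - $T_i\in K[x_1,\ldots,x_i]\setminus K[x_1,\ldots,x_{i-1}]$ and $\mathcal{R}_i\subset K[x_1,\ldots,x_{i-1}]$, where $K[x_1,\ldots,x_0]=K$; - $\mathrm{supp}(T_i)\subseteq\mathrm{supp}(\mathcal{S}^{(i)})$ and $\mathrm{supp}(\mathcal{R}_i)\subseteq\mathrm{supp}(\mathcal{S}^{(i)})$. Such a pair arises, for example, from $T_i$ and pseudo-remainders. Given such a pair, $$\mathrm{red}_i(\mathcal{S})=\bigcup_{j>i}\mathcal{S}^{(j)}\ \cup\ \{T_i\}\ \cup\ \bigcup_{j<i}\big(\mathcal{S}^{(j)}\cup\mathcal{R}_i^{(j)}\big).$$ If $\mathcal{S}^{(i)}=\emptyset$, set $\mathrm{red}_i(\mathcal{S})=\bigcup_{j}\mathcal{S}^{(j)}$. Successive reduction: $\overline{\mathrm{red}}_{n+1}(\mathcal{P})=\mathcal{P}$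 and $\overline{\mathrm{red}}_i(\mathcal{P})=\mathrm{red}_i(\overline{\mathrm{red}}_{i+1}(\mathcal{P}))$ for $i=n,\ldots,1$. At each step some reduction data for $(\overline{\mathrm{red}}_{i+1}(\mathcal{P}),i)$ is chosen. *)

(* Defs.v *)
From HB Require Import structures.
From mathcomp Require Import all_boot all_algebra.
Set Implicit Arguments. Unset Strict Implicit. Unset Printing Implicit Defensive.

(* Variables x_1 < ... < x_n are indexed 0-based by 'I_n : the ordinal i stands
   for x_(i+1); the variable order is the order on ordinals. *)

Record mpoly (K : fieldType) (n : nat) := MPoly {
  mcoef : n.-tuple nat -> K;
  mcoef_fin : exists s : seq (n.-tuple nat), forall m, mcoef m != 0%R -> m \in s }.

Definition msupp (K : fieldType) (n : nat) (F : mpoly K n) (i : 'I_n) : Prop :=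
  exists m : n.-tuple nat, mcoef F m != 0%R /\ (0 < tnth m i)%N.

Definition polyset (K : fieldType) (n : nat) := mpoly K n -> Prop.

Definition has_lv (K : fieldType) (n : nat) (F : mpoly K n) (i : 'I_n) : Prop :=
  msupp F i /\ forall j : 'I_n, msupp F j -> (j <= i)%N.

Definition level (K : fieldType) (n : nat) (S : polyset K n) (i : 'I_n) : polyset K n :=
  fun F => S F /\ has_lv F i.

Definition set_supp (K : fieldType) (n : nat) (S : polyset K n) (i : 'I_n) : Prop :=
  exists F, S F /\ msupp F i.

(* F in K[x_1,...,x_i] (0-based: all variables of F have index < i) *)
Definition in_lower (K : fieldType) (n : nat) (F : mpoly K n) (i : nat) : Prop :=
  forall j : 'I_n, msupp F j -> (j < i)%N.

Definition G_edge (K : fieldType) (n : nat) (S : polyset K n) (a b : 'I_n) : Prop :=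
  a != b /\ exists F, S F /\ msupp F a /\ msupp F b.

Definition same_graph (K : fieldType) (n : nat) (S1 S2 : polyset K n) : Prop :=
  (forall i, set_supp S1 i <-> set_supp S2 i) /\
  (forall a b, G_edge S1 a b <-> G_edge S2 a b).

(* x_1 < ... < x_n (restricted to supp(S)) is a perfect elimination ordering of G(S):
   for every vertex v, {v} ∪ {smaller neighbours of v} is a clique. *)
Definition chordal (K : fieldType) (n : nat) (S : polyset K n) : Prop :=
  forall v u w : 'I_n, set_supp S v ->
    (u = v \/ (G_edge S u v /\ (u < v)%N)) ->
    (w = v \/ (G_edge S w v /\ (w < v)%N)) ->
    u != w -> G_edge S u w.

Definition red_data (K : fieldType) (n : nat) (S : polyset K n) (i : 'I_n)
    (T : mpoly K n) (R : polyset K n) : Prop :=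
  [/\ in_lower T i.+1 /\ ~ in_lower T i,
      (forall F, R F -> in_lower F i),
      (forall j, msupp T j -> set_supp (level S i) j) &
      (forall j, set_supp R j -> set_supp (level S i) j)].

Definition red (K : fieldType) (n : nat) (S : polyset K n) (i : 'I_n)
    (T : mpoly K n) (R : polyset K n) : polyset K n :=
  fun F => (exists j : 'I_n, (i < j)%N /\ level S j F) \/ F = T \/
           (exists j : 'I_n, (j < i)%N /\ (level S j F \/ level R j F)).

Definition red_empty (K : fieldType) (n : nat) (S : polyset K n) : polyset K n :=
  fun F => exists j : 'I_n, level S j F.

(* S k = \overline{red}_{k+1}(P) for k = n, ..., 0 (0-based step index),
   with reduction data (T i, R i) chosen at step i. *)
Definition successive_reduction (K : fieldType) (n : nat) (P : polyset K n)
    (S : nat -> polyset K n) (T : 'I_n -> mpoly K n) (R : 'I_n -> polyset K n) : Prop :=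
  (forall F, S n F <-> P F) /\
  forall i : 'I_n,
    ((exists F, level (S i.+1) i F) ->
       red_data (S i.+1) i (T i) (R i) /\
       (forall F, S i F <-> red (S i.+1) i (T i) (R i) F)) /\
    (~ (exists F, level (S i.+1) i F) ->
       forall F, S i F <-> red_empty (S i.+1) F).

(* Main.v *)
Require Import Defs.
From HB Require Import structures.
From mathcomp Require Import all_boot all_algebra.
From mathcomp Require Import zify.
From Stdlib Require Import Classical.

Lemma lv_exists (K : fieldType) (n : nat) (F : mpoly K n) a :
  msupp F a -> exists j, has_lv F j.
Proof.
move=> Ha; apply: NNPP => Hno.
have H : forall m, (m <= n)%N -> exists j : 'I_n, msupp F j /\ (m <= j)%N.
  elim=> [|m IH] Hm; first by exists a.
  have [j [Hj Hmj]] := IH (ltnW Hm).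
  have : ~ has_lv F j by move=> h; apply: Hno; exists j.
  move=> Hnn; have Hn2 : ~ (forall j0 : 'I_n, msupp F j0 -> (j0 <= j)%N).
    by move=> h; apply: Hnn; split.
  case: (not_all_ex_not _ _ Hn2) => j' Himp.
  have [Hj' Hnle] := imply_to_and (msupp F j') (j' <= j)%N Himp.
  exists j'; split => //.
  have : (j < j')%N by rewrite ltnNge; apply/negP.
  lia.
have [j [_ Hj]] := H n (leqnn n).
have := ltn_ord j; lia.
Qed.

Lemma chordal_same (K : fieldType) (n : nat) (S1 S2 : polyset K n) :
  same_graph S1 S2 -> chordal S2 -> chordal S1.
Proof.
move=> [HV HE] Hc v u w Hv Hu Hw Huw.
apply/HE; apply: (Hc v u w) => //; first by apply/HV.
  by case: Hu => [->|[/HE ? ?]]; [left|right].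
by case: Hw => [->|[/HE ? ?]]; [left|right].
Qed.

Lemma same_trans (K : fieldType) (n : nat) (S1 S2 S3 : polyset K n) :
  same_graph S1 S2 -> same_graph S2 S3 -> same_graph S1 S3.
Proof.
move=> [V1 E1] [V2 E2]; split=> *; [by rewrite V1 V2|by rewrite E1 E2].
Qed.

Lemma step_nonempty (K : fieldType) (n : nat) (S' S0 : polyset K n) (i : 'I_n)
  (T : mpoly K n) (R : polyset K n) :
  chordal S' -> (exists F, level S' i F) ->
  red_data S' i T R -> (forall F, S0 F <-> red S' i T R F) ->
  (forall j, msupp T j <-> set_supp (level S' i) j) ->
  same_graph S0 S'.
Proof.
move=> Hc [F0 [HF0 [HF0i _]]] [_ HRl _ HRs] HS0 HT.
have Vle : forall a, set_supp (level S' i) a -> (a <= i)%N.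
  by move=> a [G [[_ [_ Hle]] Ha]]; apply: Hle.
have clique : forall a b, a != b -> set_supp (level S' i) a ->
    set_supp (level S' i) b -> G_edge S' a b.
  move=> a b Hab Ha Hb.
  have side : forall c, set_supp (level S' i) c ->
      c = i \/ (G_edge S' c i /\ (c < i)%N).
    move=> c Hc'; case: (eqVneq c i) => [->|Hci]; first by left.
    right; split; last by rewrite ltn_neqAle Hci Vle.
    case: Hc' => G [[HG [HGi _]] HGc].
    by split => //; exists G.
  by apply: (Hc i a b) => //; [exists F0 | apply: side | apply: side].
split.
- move=> j; split.
  + move=> [F [/HS0 HF Hj]].
    case: HF => [[j' [_ [HF _]]]|[HFT|[j' [_ [[HF _]|[HF _]]]]]]; try subst F.
    * by exists F.
    * by case: (proj1 (HT j) Hj) => G [[HG _] ?]; exists G.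
    * by exists F.
    * by case: (HRs j (ex_intro _ F (conj HF Hj))) => G [[HG _] ?]; exists G.
  + move=> [G [HG Hj]].
    have [l Hl] := @lv_exists _ _ _ _ Hj.
    case: (ltngtP i l) => Hil.
    * by exists G; split => //; apply/HS0; left; exists l.
    * by exists G; split => //; apply/HS0; right; right; exists l; split => //; left.
    * have Hil' : l = i by apply: val_inj.
      subst l.
      exists T; split; first by apply/HS0; right; left.
      by apply/HT; exists G.
- move=> a b; split.
  + move=> [Hab [F [/HS0 HF [Ha Hb]]]].
    case: HF => [[j' [_ [HF _]]]|[HFT|[j' [_ [[HF _]|[HF _]]]]]]; try subst F.
    * by split => //; exists F.
    * by apply: clique => //; apply/HT.
    * by split => //; exists F.
    * by apply: clique => //; apply: HRs; exists F.
  + move=> [Hab [G [HG [Ha Hb]]]].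
    have [l Hl] := @lv_exists _ _ _ _ Ha.
    split => //.
    case: (ltngtP i l) => Hil.
    * by exists G; split => //; apply/HS0; left; exists l.
    * by exists G; split => //; apply/HS0; right; right; exists l; split => //; left.
    * have Hil' : l = i by apply: val_inj.
      subst l.
      exists T; split; first by apply/HS0; right; left.
      by split; apply/HT; exists G.
Qed.

Lemma step_empty (K : fieldType) (n : nat) (S' S0 : polyset K n) :
  (forall F, S0 F <-> red_empty S' F) -> same_graph S0 S'.
Proof.
move=> HS0; split.
- move=> j; split.
  + by move=> [F [/HS0 [l [HF _]] Hj]]; exists F.
  + move=> [G [HG Hj]]; have [l Hl] := @lv_exists _ _ _ _ Hj.
    by exists G; split => //; apply/HS0; exists l.
- move=> a b; split.
  + by move=> [Hab [F [/HS0 [l [HF _]] Hj]]]; split => //; exists F.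
  + move=> [Hab [G [HG [Ha Hb]]]]; have [l Hl] := @lv_exists _ _ _ _ Ha.
    by split => //; exists G; split => //; apply/HS0; exists l.
Qed.

Theorem proposition3p3 (K : fieldType) (n : nat) (P : polyset K n)
    (S : nat -> polyset K n) (T : 'I_n -> mpoly K n) (R : 'I_n -> polyset K n) :
  chordal P ->
  successive_reduction P S T R ->
  (forall i : 'I_n, (exists F, level (S i.+1) i F) ->
     forall j : 'I_n, msupp (T i) j <-> set_supp (level (S i.+1) i) j) ->
  same_graph (S 0%N) P.
Proof.
move=> Hc [Hn Hstep] HT.
have base : same_graph (S n) P by split=> *; split;
  [move=> [F [/Hn ? ?]]; exists F|move=> [F [/Hn ? ?]]; exists F
  |move=> [? [F [/Hn ? ?]]]; split=> //; exists F
  |move=> [? [F [/Hn ? ?]]]; split=> //; exists F].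
suff H : forall d, (d <= n)%N -> same_graph (S (n - d)) P.
  by have := H n (leqnn n); rewrite subnn.
elim=> [|d IH] Hd; first by rewrite subn0.
have Hi : (n - d.+1 < n)%N by lia.
set i := Ordinal Hi.
have Ei : (n - d = i.+1)%N by rewrite /=; lia.
have IH' := IH (ltnW Hd); rewrite Ei in IH'.
have Hc' := chordal_same _ _ _ _ IH' Hc.
apply: (same_trans _ _ _ (S i.+1) _ _ IH').
have [Hne Hemp] := Hstep i.
case: (classic (exists F, level (S i.+1) i F)) => Hx.
- have [Hrd HS0] := Hne Hx.
  exact: (step_nonempty _ _ _ _ _ _ _ Hc' Hx Hrd HS0 (HT i Hx)).
- exact: (step_empty _ _ _ _ (Hemp Hx)).
Qed.
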